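(* Let $C'=(C'(1),\ldots,C'(c'))$ be a sequence of distinct positive integers and let $S$ be a set of $c$ positive integers, $c\in\{c',c'+1\}$, such that if $s_1<\cdots<s_c$ are the elements of $S$ and $t_1<\cdots<t_{c'}$ are the entries of $C'$ in increasing order, then $s_r\le t_r$ for all $r\le c'$. Then the two-column configuration $(\widehat C,C')$ is HHL.
   Context: A column is a finite sequence of entries listed top to bottom (entry in row $r$ is its $r$-th term). The column $\widehat C=(\widehat C(1),\ldots,\widehat C(c))$ is built from $S$ and $C'$ as follows: every $x\in S\cap C'$ is placed in the row where $x$ occurs in $C'$; if $c=c'+1$, the largest element of $S\setminus C'$ is placed in row $c$; the remaining elements of $S\setminus C'$ (there are exactly $|C'\setminus S|$ of them), taken in decreasing order, are placed in the rows occupied in $C'$ by the elements of $C'\setminus S$ taken in decreasing order (the $k$-th largest next to the $k$-th largest). A two-column configuration $(C,C')$ with left column $C$ of length $c$ and right column $C'$ of length $c'$, $c\in\{c',c'+1\}$, is HHL if the entries of $C$ are distinct, the entries of $C'$ are distinct, $C(j)\ne C'(r)$ whenever $r<j$, and $C(r)\le C'(r)$ for all $r\le c'$. *)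

(* Defs.v *)
(* Columns are sequences of naturals; row r (1-based in the
   paper) is entry r-1 (0-based nth) of the sequence. *)
From mathcomp Require Import all_boot.
Set Implicit Arguments. Unset Strict Implicit. Unset Printing Implicit Defensive.

Definition SminusC (S C' : seq nat) : seq nat :=
  sort geq [seq x <- S | x \notin C'].
Definition CminusS (S C' : seq nat) : seq nat :=
  sort geq [seq x <- C' | x \notin S].
Definition remS (S C' : seq nat) : seq nat :=
  if size S == (size C').+1 then behead (SminusC S C') else SminusC S C'.

Definition chat (S C' : seq nat) : seq nat :=
  mkseq (fun i =>
    if i < size C' then
      let x := nth 0 C' i in
      if x \in S then x else nth 0 (remS S C') (index x (CminusS S C'))
    else head 0 (SminusC S C')) (size S).

Definition HHL (C C' : seq nat) : Prop :=
  [/\ size C = size C' \/ size C = (size C').+1,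
      uniq C, uniq C',
      (forall r j, r < j -> j < size C -> r < size C' ->
          nth 0 C j != nth 0 C' r)
    & (forall r, r < size C' -> nth 0 C r <= nth 0 C' r)].

(* Main.v *)
Require Import Defs.
From mathcomp Require Import all_boot zify.
Set Implicit Arguments. Unset Strict Implicit.
Lemma G1 (r : rel nat) (p : pred nat) s i :
  transitive r -> sorted r s -> (forall a b, r a b -> p b -> p a) ->
  i < size s -> p (nth 0 s i) -> i < count p s.
Proof.
move=> tr; elim: s i => [|a s IH] i //= so pdc.
have so' : sorted r s by exact: path_sorted so.
have al : all (r a) s by exact: order_path_min so.
case: i => [|i] /=; first by move=> _ ->.
move=> his pn.
have ra : r a (nth 0 s i) by apply: (allP al); exact: mem_nth.
rewrite (pdc _ _ ra pn) add1n ltnS; exact: IH.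
Qed.

Lemma G2 (r : rel nat) (p : pred nat) s i :
  transitive r -> sorted r s -> (forall a b, r a b -> p b -> p a) ->
  i < size s -> ~~ p (nth 0 s i) -> count p s <= i.
Proof.
move=> tr; elim: s i => [|a s IH] i //= so pdc.
have so' : sorted r s by exact: path_sorted so.
have al : all (r a) s by exact: order_path_min so.
case: i => [|i] /=.
  move=> _ pa.
  rewrite (negbTE pa) add0n leqn0 eqn0Ngt -has_count; apply/hasPn => b bs.
  by apply/negP => pb; rewrite (pdc _ _ (allP al b bs) pb) in pa.
move=> his pn.
by rewrite -add1n leq_add ?leq_b1 // IH.
Qed.
Lemma geq_tr : transitive geq.
Proof. by move=> y x z /= h1 h2; exact: leq_trans h2 h1. Qed.

Lemma Dlem (a b : seq nat) : sorted geq a -> sorted geq b -> size a = size b ->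
  (forall x, count (fun y => y <= x) b <= count (fun y => y <= x) a) ->
  forall k, k < size b -> nth 0 a k <= nth 0 b k.
Proof.
move=> sa sb eab H k kb; rewrite leqNgt; apply/negP => lt.
set x := nth 0 b k.
have dc : forall u v, geq u v -> predC (fun y => y <= x) v -> predC (fun y => y <= x) u.
  move=> u v /= vu; rewrite -!ltnNge => xv; exact: leq_trans xv vu.
have ka : k < size a by rewrite eab.
have h1 := G1 geq_tr sa dc ka ltac:(by rewrite /= -ltnNge).
have h2 := G2 geq_tr sb dc kb ltac:(by rewrite /= negbK).
have := H x; have := count_predC (fun y => y <= x) a; have := count_predC (fun y => y <= x) b.
rewrite eab; move: h1 h2; set u := count _ a; set v := count _ b.
set u' := count _ a; set v' := count _ b. move=> *; lia.
Qed.

Lemma Alem (C' S : seq nat) : size C' <= size S ->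
  (forall r, r < size C' -> nth 0 (sort leq S) r <= nth 0 (sort leq C') r) ->
  forall x, count (fun y => y <= x) C' <= count (fun y => y <= x) S.
Proof.
move=> sz H x; rewrite -(count_sort leq _ C') -(count_sort leq _ S).
have dc : forall u v, leq u v -> (fun y => y <= x) v -> (fun y => y <= x) u.
  by move=> u v uv vx; exact: leq_trans uv vx.
case E: (count _ (sort leq C')) => [|j] //.
have jc : j < size (sort leq C') by rewrite -E; apply: count_size.
have nj : nth 0 (sort leq C') j <= x.
  apply/negPn/negP => nn.
  have := G2 leq_trans (sort_sorted leq_total C') dc jc nn; rewrite E ltnn //.
have nS : nth 0 (sort leq S) j <= x by apply: leq_trans nj; apply: H; rewrite size_sort in jc.
apply: (G1 leq_trans (sort_sorted leq_total S) dc) => //.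
rewrite size_sort; rewrite size_sort in jc; exact: leq_trans jc sz.
Qed.
Lemma count_split (p : pred nat) (s t : seq nat) :
  count p s = count p [seq x <- s | x \notin t] + count p [seq x <- s | x \in t].
Proof.
elim: s => //= y s ->; case: (y \in t) => /=; case: (p y) => /=; lia.
Qed.

Lemma size_split (s t : seq nat) :
  size s = size [seq x <- s | x \notin t] + size [seq x <- s | x \in t].
Proof. by have := count_split predT s t; rewrite !count_predT. Qed.

Theorem proposition4p1 (C' S : seq nat) :
  uniq C' -> all (fun x => 0 < x) C' ->
  uniq S -> all (fun x => 0 < x) S ->
  (size S = size C' \/ size S = (size C').+1) ->
  (forall r, r < size C' -> nth 0 (sort leq S) r <= nth 0 (sort leq C') r) ->
  HHL (chat S C') C'.
Proof.
move=> uC _ uS _ hsz H.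
set A : seq nat := [seq x <- S | x \notin C'].
set Bf : seq nat := [seq x <- C' | x \notin S].
set I1 : seq nat := [seq x <- S | x \in C'].
set I2 : seq nat := [seq x <- C' | x \in S].
have pI : perm_eq I1 I2.
  apply: uniq_perm; rewrite ?filter_uniq // => y.
  by rewrite !mem_filter andbC.
have szS := size_split S C'. have szC := size_split C' S.
rewrite -/A -/I1 in szS; rewrite -/Bf -/I2 in szC.
change (size S = size A + size I1) in szS.
change (size C' = size Bf + size I2) in szC.
have sI : size I1 = size I2 := perm_size pI.
have cnt : forall x, count (fun y => y <= x) Bf <= count (fun y => y <= x) A.
  move=> x.
  have h1 := count_split (fun y => y <= x) S C'.
  have h2 := count_split (fun y => y <= x) C' S.
  rewrite -/A -/I1 in h1; rewrite -/Bf -/I2 in h2.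
  change (count (fun y => y <= x) S = count (fun y => y <= x) A + count (fun y => y <= x) I1) in h1.
  change (count (fun y => y <= x) C' = count (fun y => y <= x) Bf + count (fun y => y <= x) I2) in h2.
  have h3 : count (fun y => y <= x) I1 = count (fun y => y <= x) I2 := (permP pI) _.
  have sz0 : size C' <= size S by case: hsz => ->.
  have h4 := Alem sz0 H x.
  lia.
set sA := sort geq A. set B := sort geq Bf. set R := remS S C'.
have Rdef : R = if size S == (size C').+1 then behead sA else sA by [].
have usA : uniq sA by rewrite sort_uniq filter_uniq.
have uB : uniq B by rewrite sort_uniq filter_uniq.
have ssA : sorted geq sA by apply: sort_sorted => u v; apply: leq_total.
have sB : sorted geq B by apply: sort_sorted => u v; apply: leq_total.
have memsA : forall y, (y \in sA) = (y \in S) && (y \notin C').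
  by move=> y; rewrite mem_sort mem_filter andbC.
have memB : forall y, (y \in B) = (y \in C') && (y \notin S).
  by move=> y; rewrite mem_sort mem_filter andbC.
have [uR sR szR cntR [memR hd]] : [/\ uniq R, sorted geq R, size R = size B,
   (forall x, count (fun y => y <= x) B <= count (fun y => y <= x) R) &
   ((forall y, y \in R -> y \in sA) /\
   (size S = (size C').+1 -> sA = head 0 sA :: R))].
  rewrite Rdef; case: hsz => hs.
  - rewrite hs.
    have -> : (size C' == (size C').+1) = false by rewrite eqn_leq ltnn andbF.
    split => //; first by rewrite /sA /B !size_sort; lia.
    - by move=> x; rewrite !count_sort; apply: cnt.
    - by split => // E; exfalso; lia.
  - rewrite hs eqxx.
    have : size sA = (size B).+1 by rewrite /sA /B !size_sort; lia.
    case E: sA => [|a R'] //= [sz].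
    have sAc := ssA; rewrite E /= in sAc.
    split => //.
    - by move: usA; rewrite E => /andP[].
    - exact: path_sorted sAc.
    - move=> x; rewrite count_sort.
      have := cnt x; rewrite -(count_sort geq _ A) -/sA E /=.
      case: (leqP a x) => ax /=; last by rewrite add0n.
      have al : all (geq a) R' by exact: order_path_min geq_tr sAc.
      have -> : count (fun y => y <= x) R' = size R'.
        apply/eqP; rewrite -all_count; apply/allP => y yR.
        exact: leq_trans (allP al y yR) ax.
      move=> _; rewrite sz /B size_sort; apply: count_size.
    - by split => // y yR; rewrite inE yR orbT.
have nthc : forall i, i < size S -> nth 0 (chat S C') i =
   if i < size C' then (if nth 0 C' i \in S then nth 0 C' i
      else nth 0 R (index (nth 0 C' i) B)) else head 0 sA.
  by move=> i hi; rewrite /chat nth_mkseq.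
have szc : size (chat S C') = size S by rewrite size_mkseq.
set Ch := chat S C'.
have RnC : forall y, y \in R -> y \notin C'.
  by move=> y /memR; rewrite memsA => /andP[].
have idxB : forall i, i < size C' -> nth 0 C' i \notin S -> index (nth 0 C' i) B < size R.
  by move=> i ci si; rewrite szR index_mem memB mem_nth.
have hdp : size S = (size C').+1 -> head 0 sA \notin C' /\ head 0 sA \notin R.
  move=> hs; have E := hd hs.
  have hin : head 0 sA \in sA by rewrite E inE eqxx.
  split; first by move: hin; rewrite memsA => /andP[].
  by move: usA; rewrite E => /andP[].
have K : forall i, i < size S ->
  [\/ [/\ i < size C', nth 0 C' i \in S & nth 0 Ch i = nth 0 C' i],
      [/\ i < size C', nth 0 C' i \notin S & nth 0 Ch i = nth 0 R (index (nth 0 C' i) B)]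
    | [/\ i = size C', size S = (size C').+1 & nth 0 Ch i = head 0 sA]].
  move=> i hi; rewrite nthc //; case: ltnP => ci.
    by case: ifP => si; [constructor 1 | constructor 2]; rewrite ?si.
  constructor 3; case: hsz => hs; rewrite hs in hi; try lia.
  by split => //; lia.
split.
- by rewrite szc.
- apply/(uniqP 0) => i j; rewrite !inE szc => hi hj e.
  case: (K i hi) => [[ci si ei]|[ci si ei]|[ci s1 ei]];
  case: (K j hj) => [[cj sj ej]|[cj sj ej]|[cj s1' ej]]; rewrite ei ej in e.
  + by apply/eqP; rewrite -(nth_uniq 0 ci cj uC); apply/eqP.
  + by have := RnC _ (mem_nth 0 (idxB j cj sj)); rewrite -e (mem_nth 0 ci).
  + by have := (hdp s1').1; rewrite -e (mem_nth 0 ci).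
  + by have := RnC _ (mem_nth 0 (idxB i ci si)); rewrite e (mem_nth 0 cj).
  + move/eqP: e; rewrite (nth_uniq 0 (idxB i ci si) (idxB j cj sj) uR) => /eqP e.
    have : nth 0 B (index (nth 0 C' i) B) = nth 0 B (index (nth 0 C' j) B) by rewrite e.
    rewrite !nth_index ?memB ?mem_nth ?si ?sj // => /eqP.
    by rewrite (nth_uniq 0 ci cj uC) => /eqP.
  + by have := (hdp s1').2; rewrite -e (mem_nth 0 (idxB i ci si)).
  + by have := (hdp s1).1; rewrite e (mem_nth 0 cj).
  + by have := (hdp s1).2; rewrite e (mem_nth 0 (idxB j cj sj)).
  + by rewrite ci cj.
- exact: uC.
- move=> r j rj; rewrite szc => hj hr.
  case: (K j hj) => [[cj sj ej]|[cj sj ej]|[cj s1 ej]]; rewrite ej.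
  + by rewrite (nth_uniq 0 cj hr uC) gtn_eqF.
  + by apply/negP => /eqP e; have := RnC _ (mem_nth 0 (idxB j cj sj)); rewrite e mem_nth.
  + by apply/negP => /eqP e; have := (hdp s1).1; rewrite e mem_nth.
- move=> r hr.
  have hrS : r < size S by case: hsz => ->; lia.
  case: (K r hrS) => [[cr sr er]|[cr sr er]|[cr s1 er]]; rewrite er //.
  + have ib := idxB r cr sr.
    have := @Dlem R B sR sB szR cntR (index (nth 0 C' r) B) ltac:(by rewrite -szR).
    by rewrite nth_index // memB mem_nth.
  + by rewrite cr ltnn in hr.
Qed.
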